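(* There is an absolute constant $c$ such that, for every instance, every arrival order, every admissible choice of the forests $\hat F^{(t)}_{{\rm inh},i}\subseteq\hat F^{(t)}_i$, and every level $i\ge0$, \[ \sum_{t=1}^{n}\bigl|\hat F^{(t)}_{i}\setminus\hat F^{(t)}_{{\rm inh},i}\bigr|\cdot 2^{i+1}\le c\cdot\mathsf{OPT}, \] where $\mathsf{OPT}$ is the cost of an optimal Steiner forest solution to the final instance $(\mathcal{M}^{(n)},D^{(n)})$.
   Context: An offline instance $(\mathcal{M},D)$ consists of demand pairs $D=\{(u_j,v_j)\}$ over a terminal set $V=\{u_j,v_j\}$, each terminal in exactly one pair (the other element of its pair is its mate), and a metric $\mathcal{M}$ on $V$ with all distances at least $1$, viewed as the complete graph on $V$ with edge costs equal to distances; a feasible solution is an edge set in which every pair is connected, and its cost is the sum of its edge costs. A clustering of $V$ is a partition of $V$; $\mathcal{M}/\mathscr{C}$ denotes the shortest-path metric on $\mathscr{C}$ of the graph obtained from the complete weighted graph on $V$ by contracting each cluster of $\mathscr{C}$ into a single vertex. For clusterings $\mathscr{C}_1$ of $V_1$ and $\mathscr{C}_2$ of $V_2$, write $\mathscr{C}_1\preceq\mathscr{C}_2$ if every cluster of $\mathscr{C}_1$ is contained in some cluster of $\mathscr{C}_2$. Clustering procedure: ${\sf level}(v)=\lceil\log_2{\sf dist}_{\mathcal{M}}(v,\text{mate of }v)\rceil$, ${\sf level}(C)=\max_{v\in C}{\sf level}(v)$, $L=\max_v{\sf level}(v)$. $\mathscr{C}_0$ is the singleton clustering. For $i=0,\dots,L$: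 $C\in\mathscr{C}_i$ is $i$-active if ${\sf level}(C)\ge i$; $H_i$ has as vertices the $i$-active clusters of $\mathscr{C}_i$, with an edge between distinct $C_1,C_2$ iff ${\sf dist}_{\mathcal{M}/\mathscr{C}_i}(C_1,C_2)<2^{i+1}$; $\mathscr{C}_{i+1}$ consists of the non-$i$-active clusters of $\mathscr{C}_i$ together with, for each connected component of $H_i$, the union of its clusters. Online setting: $n$ pairs arrive in order; for $1\le t\le n$ the instance $(\mathcal{M}^{(t)},D^{(t)})$ consists of the first $t$ pairs and the metric restricted to their terminals. Running the procedure yields $L^{(t)},\mathscr{C}^{(t)}_i,H^{(t)}_i$; for $i\ge L^{(t)}+1$, $\mathscr{C}^{(t)}_i:=\mathscr{C}^{(t)}_{L^{(t)}+1}$ and $H^{(t)}_i$ is empty; for $t=0$ all $\mathscr{C}^{(0)}_i,H^{(0)}_i$ are empty. It holds that $\mathscr{C}^{(t-1)}_i\preceq\mathscr{C}^{(t)}_i$. Virtual forests are chosen recursively in $t$: $\hat F^{(0)}_i=\emptyset$. Given the spanning forest $\hat F^{(t-1)}_i$ of $H^{(t-1)}_i$, for each edge $(C_1,C_2)\in\hat F^{(t-1)}_i$ let $D_1,D_2$ be the clusters of $\mathscr{C}^{(t)}_i$ containing $C_1,C_2$; if $D_1\ne D_2$ then $(D_1,D_2)$ is an edge of $H^{(t)}_i$, called inherited. Let $\hat F^{(t)}_{{\rm inh},i}$ be an arbitrary spanning forest of the subgraph of $H^{(t)}_i$ formed by its inherited edges, and let $\hat F^{(t)}_i$ be an arbitrary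 spanning forest of $H^{(t)}_i$ containing $\hat F^{(t)}_{{\rm inh},i}$ (these arbitrary choices are the ''admissible choices''). *)

(* Defs.v *)
From HB Require Import structures.
From mathcomp Require Import all_boot all_order all_algebra.
From mathcomp Require Import boolp classical_sets reals.
Set Implicit Arguments.
Unset Strict Implicit.
Unset Printing Implicit Defensive.
Import Order.TTheory GRing.Theory Num.Theory.
Local Open Scope ring_scope.

(* edge is a 2-element set [set x; y]; an edge set is a set of these.  *)
Section Graphs.
Variable X : finType.

Definition frel (F : {set {set X}}) : rel X := fun x y => [set x; y] \in F.

Definition acyclic (F : {set {set X}}) : Prop :=
  ~ exists s : seq X, [/\ uniq s, (3 <= size s)%N & cycle (frel F) s].

Definition spanning_forest (E F : {set {set X}}) : Prop :=
  [/\ F \subset E, acyclic F &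
      forall x y : X, [set x; y] \in E -> connect (frel F) x y].
End Graphs.

(* Online instances.  The n demand pairs arrive in the order 0..n-1;  *)
(* terminal (j, false) is u_j and (j, true) is v_j.                    *)
Definition term (n : nat) := ('I_n * bool)%type.

Definition mate (n : nat) (x : term n) : term n := (x.1, ~~ x.2).

Section Instance.
Variables (R : realType) (n : nat) (d : term n -> term n -> R).

Definition is_metric_ge1 : Prop :=
  (forall x, d x x = 0) /\ (forall x y, d x y = d y x) /\
  (forall x y z, d x z <= d x y + d y z) /\
  (forall x y, x != y -> 1 <= d x y).

Definition Vt (t : nat) : {set term n} := [set x : term n | (x.1 < t)%N].

Lemma exists_pow2_ge (x : R) : exists k : nat, x <= 2 ^+ k.
Proof.
have [x0|x0] := leP x 0.
  by exists 0%N; rewrite expr0 (le_trans x0) ?ler01.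
exists (Num.bound x).
apply: (le_trans (ltW (archi_boundP (ltW x0)))).
by rewrite -natrX ler_nat ltnW // ltn_expl.
Qed.

(* level(v) = ceil(log2 dist(v, mate v)) = least k with dist <= 2^k
   (distances are >= 1, so this is the ceiling of the binary log) *)
Definition lev (x : term n) : nat :=
  ex_minn (exists_pow2_ge (d x (mate x))).

Definition levC (C : {set term n}) : nat := (\max_(v in C) lev v)%N.

(* edge weight in the graph obtained by contracting the clusters of P *)
Definition cw (P : {set {set term n}}) (x y : term n) : R :=
  if finset.pblock P x == finset.pblock P y then 0 else d x y.

Fixpoint wlen (P : {set {set term n}}) (x : term n) (s : seq (term n)) : R :=
  if s is y :: s' then cw P x y + wlen P y s' else 0.

(* shortest-path distance between clusters C1, C2 in M / P, where the
   underlying vertex set is cover P *)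
Definition cdist (P : {set {set term n}}) (C1 C2 : {set term n}) : R :=
  inf [set r : R | exists (x : term n) (s : seq (term n)),
        [/\ x \in C1, last x s \in C2, all (fun z => z \in finset.cover P) (x :: s)
          & r = wlen P x s]].

Definition act (P : {set {set term n}}) (i : nat) : {set {set term n}} :=
  [set C in P | (i <= levC C)%N].

Definition hadj (P : {set {set term n}}) (i : nat) : rel {set term n} :=
  fun A B => [&& A \in act P i, B \in act P i, A != B &
                 cdist P A B < 2 ^+ i.+1].

Definition hedges (P : {set {set term n}}) (i : nat) : {set {set {set term n}}} :=
  [set [set A; B] | A in act P i, B in act P i & hadj P i A B].

Definition step (P : {set {set term n}}) (i : nat) : {set {set term n}} :=
  [set C in P | (levC C < i)%N] :|:
  [set (\bigcup_(B | connect (hadj P i) A B) B) | A in act P i].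

(* clustering C^(t)_i of the instance after t arrivals; for i > L^(t)
   nothing is active, so this is C^(t)_{L+1}, and for t = 0 it is empty *)
Fixpoint clus (t i : nat) : {set {set term n}} :=
  if i is i'.+1 then step (clus t i') i' else [set [set x] | x in Vt t].

(* edge set of H^(t)_i (empty for i > L^(t) and for t = 0) *)
Definition Hedges (t i : nat) := hedges (clus t i) i.

(* inherited edges of H^(t)_i, w.r.t. the forest Fprev = hat F^(t-1)_i:
   edges {D1,D2} of H^(t)_i such that some edge {C1,C2} of Fprev has
   C1 contained in D1 and C2 contained in D2 *)
Definition inh_edges (t i : nat) (Fprev : {set {set {set term n}}}) :=
  [set e in Hedges t i |
    [exists D1 : {set term n}, exists D2 : {set term n},
     exists C1 : {set term n}, exists C2 : {set term n},
      [&& e == [set D1; D2], [set C1; C2] \in Fprev,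
          C1 \subset D1 & C2 \subset D2]]].

(* admissible choice of the virtual forests hat F^(t)_i (F) and
   hat F^(t)_{inh,i} (Finh), for 1 <= t <= n and all levels i *)
Definition admissible
    (Finh F : nat -> nat -> {set {set {set term n}}}) : Prop :=
  (forall i, F 0%N i = finset.set0) /\
  (forall t i, (1 <= t <= n)%N ->
     [/\ spanning_forest (inh_edges t i (F t.-1 i)) (Finh t i),
         spanning_forest (Hedges t i) (F t i) &
         Finh t i \subset F t i]).

(* a solution is a set of edges (x,y) of the complete graph on V *)
Definition srel (S : {set term n * term n}) : rel (term n) :=
  fun x y => ((x, y) \in S) || ((y, x) \in S).

Definition feasible (S : {set term n * term n}) : Prop :=
  forall j : 'I_n, connect (srel S) (j, false) (j, true).

Definition cost (S : {set term n * term n}) : R := \sum_(p in S) d p.1 p.2.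

Definition OPT : R := inf [set r : R | exists S, feasible S /\ r = cost S].

End Instance.

(* Main.v *)
Require Import Defs.
From HB Require Import structures.
From mathcomp Require Import all_boot all_order all_algebra.
From mathcomp Require Import boolp classical_sets reals.
From mathcomp Require Import ssrnat seq path fingraph fintype finset.
From mathcomp Require Import ring lra zify.
Import Order.TTheory GRing.Theory Num.Theory.
Local Open Scope ring_scope.
Set Implicit Arguments.
Unset Strict Implicit.
Unset Printing Implicit Defensive.
Section GraphCount.
Variable X : finType.
Implicit Types (V : {set X}) (E F G : {set {set X}}).

Definition cls V E x := [set y in V | connect (Defs.frel E) x y].
Definition ncl V E := #|[set cls V E x | x in V]|.

Lemma frel_sym E : symmetric (Defs.frel E).
Proof. by move=> x y; rewrite /Defs.frel setUC. Qed.

Lemma cls_eq V E x y : x \in V -> y \in V ->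
  (cls V E x == cls V E y) = connect (Defs.frel E) x y.
Proof.
move=> xV yV; have cs := sym_connect_sym (frel_sym E).
apply/eqP/idP => [h|cxy].
  have : y \in cls V E y by rewrite /cls inE yV connect0.
  by rewrite -h /cls inE => /andP[].
apply/setP=> z; rewrite /cls !inE; case: (z \in V) => //=.
apply/idP/idP => h.
  by apply: connect_trans h; rewrite cs.
exact: connect_trans cxy h.
Qed.

Lemma card_img_le (T U W : finType) (f : T -> U) (g : T -> W) (A : {set T}) :
  {in A &, forall x y, g x = g y -> f x = f y} -> (#|f @: A| <= #|g @: A|)%N.
Proof.
move=> H.
pose h (w : W) := omap f [pick x in A | g x == w].
have -> : #|f @: A| = #|Some @: (f @: A)| by rewrite (card_imset _ (@Some_inj _)).
apply: leq_trans (leq_imset_card h _).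
apply: subset_leq_card; apply/subsetP => o /imsetP [u /imsetP [x xA ->] ->].
apply/imsetP; exists (g x); first exact: imset_f.
rewrite /h; case: pickP => [y /andP[yA /eqP gy]|]; last by move/(_ x); rewrite xA eqxx.
by rewrite /= (H y x).
Qed.

Lemma card_img_lt (T U W : finType) (f : T -> U) (g : T -> W) (A : {set T}) a b :
  {in A &, forall x y, g x = g y -> f x = f y} -> a \in A -> b \in A ->
  f a = f b -> g a != g b -> (#|f @: A| < #|g @: A|)%N.
Proof.
move=> H aA bA fab gab.
pose h (w : W) := omap f [pick x in A | g x == w].
have hg x : x \in A -> h (g x) = Some (f x).
  move=> xA; rewrite /h; case: pickP => [y /andP[yA /eqP gy]|]; last by move/(_ x); rewrite xA eqxx.
  by rewrite /= (H y x).
have -> : #|f @: A| = #|Some @: (f @: A)| by rewrite (card_imset _ (@Some_inj _)).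
have sub : Some @: (f @: A) \subset h @: (g @: A).
  apply/subsetP => o /imsetP [u /imsetP [x xA ->] ->].
  by apply/imsetP; exists (g x); [exact: imset_f | rewrite hg].
apply: leq_ltn_trans (subset_leq_card sub) _.
rewrite ltn_neqAle leq_imset_card andbT.
apply/negP => /imset_injP inj.
have := inj (g a) (g b) (imset_f _ aA) (imset_f _ bA).
by rewrite !hg // fab => /(_ erefl) /eqP; rewrite (negPf gab).
Qed.

Lemma ncl_mono V E E' :
  {in V &, forall x y, connect (Defs.frel E) x y -> connect (Defs.frel E') x y} ->
  (ncl V E' <= ncl V E)%N.
Proof.
move=> H; apply: card_img_le => x y xV yV /eqP.
by rewrite !cls_eq // => /H => /(_ xV yV) h; apply/eqP; rewrite cls_eq.
Qed.

Lemma ncl_strict V E E' a b :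
  {in V &, forall x y, connect (Defs.frel E) x y -> connect (Defs.frel E') x y} ->
  a \in V -> b \in V -> connect (Defs.frel E') a b -> ~~ connect (Defs.frel E) a b ->
  (ncl V E' < ncl V E)%N.
Proof.
move=> H aV bV c' nc; apply: (card_img_lt (a := a) (b := b)) => //.
- move=> x y xV yV /eqP.
  by rewrite !cls_eq // => /H => /(_ xV yV) h; apply/eqP; rewrite cls_eq.
- by apply/eqP; rewrite cls_eq.
- by rewrite cls_eq.
Qed.

Lemma connect_subset E E' x y : E \subset E' ->
  connect (Defs.frel E) x y -> connect (Defs.frel E') x y.
Proof.
move=> sE; apply: connect_sub => u v h; apply: connect1.
by move: h; rewrite /Defs.frel => /(subsetP sE).
Qed.

Lemma forest_count V F G : acyclic F -> G \subset F ->
  {in F, forall e, exists a b, [/\ a != b, a \in V, b \in V & e = [set a; b]]} ->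
  (#|F :\: G| + ncl V F <= ncl V G)%N.
Proof.
move=> acF sGF0 Fe.
move: sGF0; move Ek: #|F :\: G| => k.
elim: k G Ek => [|k IH] G ek sGF.
  rewrite add0n; apply: ncl_mono => x y _ _; exact: connect_subset.
have : (0 < #|F :\: G|)%N by rewrite ek.
case/card_gt0P => e; rewrite inE => /andP[eG eF].
have [a [b [ab aV bV de]]] := Fe e eF.
pose G' := e |: G.
have sG'F : G' \subset F by rewrite subUset sub1set eF sGF.
have ek' : #|F :\: G'| = k.
  have : #|F :\: G| = #|F :\: G'|.+1.
    rewrite /G' setDUr.
    rewrite -(cardsID [set e] (F :\: G)).
    have -> : (F :\: G) :&: [set e] = [set e].
      apply/setP=> z; rewrite !inE; case: (eqVneq z e) => [->|]; rewrite ?andbF //.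
      by rewrite eG eF.
    rewrite cards1 add1n; congr _.+1; apply: eq_card => z; rewrite !inE.
    by case: (z == e); case: (z \in G); case: (z \in F).
  by rewrite ek => [[]].
have := IH G' ek' sG'F.
suff lt : (ncl V G' < ncl V G)%N.
  by move=> h; rewrite addSn; apply: leq_ltn_trans h _.
apply: (ncl_strict (a := a) (b := b)) => //.
- move=> x y _ _; apply: connect_subset; exact: subsetUr.
- by apply: connect1; rewrite /Defs.frel -de setU11.
apply/negP => /connectP [p pth lp].
move: lp; case: (shortenP pth) => p' pth' up' _ lp'.
apply: acF; exists (a :: p'); split => //.
  rewrite /= ltnS.
  case: p' pth' up' lp' => [|c [|c' p'']] //=.
    by move=> _ _ ba; move: ab; rewrite ba eqxx.
  move=> /andP[fac _] _ cb; move: fac; rewrite /Defs.frel -cb -de.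
  by rewrite (negPf eG).
rewrite /cycle rcons_path -lp'.
rewrite (sub_path _ pth') /=; last first.
  by move=> x y; rewrite /Defs.frel => /(subsetP sGF).
by rewrite /Defs.frel setUC -de.
Qed.

End GraphCount.
Lemma connect_hom (T T' : finType) (e : rel T) (e' : rel T') (f : T -> T')
    (a : pred T) x y :
  (forall u v, a u -> e u v -> a v) ->
  (forall u v, a u -> e u v -> connect e' (f u) (f v)) ->
  a x -> connect e x y -> connect e' (f x) (f y).
Proof.
move=> ha hc ax /connectP [p pth ->].
elim: p x ax pth => [|z p IH] x ax /=; first by rewrite connect0.
case/andP => exz pz; apply: connect_trans (hc _ _ ax exz) _.
exact: IH (ha _ _ ax exz) pz.
Qed.

Lemma conn_in (T : finType) (e : rel T) (a : pred T) x y :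
  (forall u v, e u v -> a v) -> a x -> connect e x y -> a y.
Proof.
move=> h ax /connectP [p pth ->].
elim: p x ax pth => [|z p IH] x ax //= /andP[exz pz].
exact: IH (h _ _ exz) pz.
Qed.


Lemma disjP (T : finType) (A B : {set T}) :
  (forall x, x \in A -> x \in B -> False) -> [disjoint A & B].
Proof.
move=> h; rewrite -setI_eq0; apply/negPn/negP => /set0Pn [x].
by rewrite inE => /andP [xa xb]; exact: h x xa xb.
Qed.
Section Metric.
Variables (R : realType) (n : nat) (d : term n -> term n -> R).
Hypothesis dm : is_metric_ge1 d.
Implicit Types (A B C D X Y W : {set term n}) (P : {set {set term n}}).

Lemma d0 x : d x x = 0. Proof. by case: dm. Qed.
Lemma dsym x y : d x y = d y x. Proof. by case: dm => _ []. Qed.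
Lemma dtri x y z : d x z <= d x y + d y z. Proof. by case: dm => _ [_ []]. Qed.
Lemma dge1 x y : x != y -> 1 <= d x y. Proof. by case: dm => _ [_ [_ h]]; exact: h. Qed.
Lemma dge0 x y : 0 <= d x y.
Proof. have := dtri x y x; rewrite d0 (dsym y x) => h; lra. Qed.

Lemma cw_ge0 P x y : 0 <= cw d P x y.
Proof. by rewrite /cw; case: ifP => // _; exact: dge0. Qed.
Lemma cw_le P x y : cw d P x y <= d x y.
Proof. by rewrite /cw; case: ifP => // _; exact: dge0. Qed.
Lemma cw_sym P x y : cw d P x y = cw d P y x.
Proof. by rewrite /cw eq_sym dsym. Qed.

Lemma wlen_ge0 P x s : 0 <= wlen d P x s.
Proof. elim: s x => //= y s IH x; apply: addr_ge0; [exact: cw_ge0|exact: IH]. Qed.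

Definition wl P (w : seq (term n)) := if w is x :: s then wlen d P x s else 0.

Lemma wlen_rcons P x s z : wlen d P x (rcons s z) = wlen d P x s + cw d P (last x s) z.
Proof. elim: s x => [|y s IH] x /=; first by rewrite addr0 add0r. by rewrite IH addrA. Qed.

Lemma wl_rev P x s : wlen d P x s = wl P (rev (x :: s)).
Proof.
elim: s x => [|y s IH] x //=.
rewrite IH [rev (x :: _)]rev_cons.
have : rev (y :: s) = rcons (rev s) y by rewrite rev_cons.
case: (rev (y :: s)) => [|h w'] ew; first by case: (rev s) ew.
rewrite /= wlen_rcons addrC cw_sym.
by have := congr1 (last h) ew; rewrite last_rcons /= => ->.
Qed.

Lemma cdist_lb P (A B : {set term n}) : has_lbound
  [set r : R | exists (x : term n) (s : seq (term n)),
        [/\ x \in A, last x s \in B, all (fun z => z \in cover P) (x :: s)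
          & r = wlen d P x s]]%classic.
Proof. by exists 0 => r [x [s [_ _ _ ->]]]; exact: wlen_ge0. Qed.

Lemma cdist_le P (A B : {set term n}) x y : x \in A -> y \in B -> x \in cover P -> y \in cover P ->
  cdist d P A B <= d x y.
Proof.
move=> xA yB xc yc; apply: le_trans (cw_le P x y).
rewrite -[cw d P x y]addr0.
apply: (ge_inf (cdist_lb P A B)); exists x, [:: y]; split => //=.
by rewrite xc yc.
Qed.

Lemma cdist_sym P (A B : {set term n}) : cdist d P A B = cdist d P B A.
Proof.
suff H : forall A B : {set term n}, ([set r : R | exists (x : term n) (s : seq (term n)),
        [/\ x \in A, last x s \in B, all (fun z => z \in cover P) (x :: s)
          & r = wlen d P x s]] `<=`
  [set r : R | exists (x : term n) (s : seq (term n)),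
        [/\ x \in B, last x s \in A, all (fun z => z \in cover P) (x :: s)
          & r = wlen d P x s]])%classic.
  by rewrite /cdist; congr inf; apply/seteqP; split; apply: H.
move=> {}A {}B r [x [s [xA lB al ->]]].
have ew : rev (x :: s) = last x s :: rev (belast x s) by rewrite lastI rev_rcons.
exists (last x s), (rev (belast x s)); split.
- exact: lB.
- by case: s {lB al ew} => //= a s0; rewrite rev_cons last_rcons.
- by rewrite -ew all_rev.
- by rewrite wl_rev ew.
Qed.


Definition refine (P P' : {set {set term n}}) :=
  forall C, C \in P -> exists2 D, D \in P' & C \subset D.
Definition part (P : {set {set term n}}) (V : {set term n}) :=
  [/\ trivIset P, cover P = V & set0 \notin P].

Lemma cover_refine P P' : refine P P' -> cover P \subset cover P'.
Proof.
move=> rf; apply/subsetP => z /bigcupP [C CP zC].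
have [D DP sD] := rf C CP; apply/bigcupP; exists D => //; exact: (subsetP sD).
Qed.

Lemma cw_mono P P' x y : trivIset P' -> refine P P' ->
  x \in cover P -> y \in cover P -> cw d P' x y <= cw d P x y.
Proof.
move=> tP' rf xc yc; rewrite /cw.
case: (eqVneq (pblock P x) (pblock P y)) => [e|_]; last first.
  by case: ifP => _ //; exact: dge0.
have [D DP sD] := rf _ (pblock_mem xc).
have xD : x \in D by apply: (subsetP sD); rewrite mem_pblock.
have yD : y \in D by apply: (subsetP sD); rewrite e mem_pblock.
by rewrite (def_pblock tP' DP xD) (def_pblock tP' DP yD) eqxx.
Qed.

Lemma wlen_mono P P' x s : trivIset P' -> refine P P' ->
  all (fun z => z \in cover P) (x :: s) -> wlen d P' x s <= wlen d P x s.
Proof.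
move=> tP' rf; elim: s x => [|y s IH] x //= /and3P [xc yc al].
apply: lerD; first exact: cw_mono.
by apply: IH; rewrite /= yc.
Qed.

Lemma cdist_mono P P' (A B A' B' : {set term n}) : trivIset P' -> refine P P' ->
  A \subset A' -> B \subset B' -> A != set0 -> B != set0 ->
  A \subset cover P -> B \subset cover P -> cdist d P' A' B' <= cdist d P A B.
Proof.
move=> tP' rf sA sB nA nB cA cB.
apply: lb_le_inf.
  case/set0Pn: nA => a aA; case/set0Pn: nB => b bB.
  exists (wlen d P a [:: b]), a, [:: b]; split => //=.
  by rewrite (subsetP cA) ?(subsetP cB).
move=> r [x [s [xA lB al ->]]].
apply: le_trans (wlen_mono tP' rf al).
apply: (ge_inf (cdist_lb P' A' B')); exists x, s; split => //.
- exact: (subsetP sA).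
- exact: (subsetP sB).
- by apply: sub_all al => z; apply: (subsetP (cover_refine rf)).
Qed.

Lemma levC_mono (C D : {set term n}) : C \subset D -> (levC d C <= levC d D)%N.
Proof.
rewrite /levC => s; apply/bigmax_leqP => v vC; apply: leq_bigmax_cond.
exact: (subsetP s).
Qed.

Lemma lev_le_levC (C : {set term n}) v : v \in C -> (lev d v <= levC d C)%N.
Proof. by move=> vC; rewrite /levC; apply: leq_bigmax_cond. Qed.

Lemma exists_lev (C : {set term n}) i : C != set0 -> (i <= levC d C)%N ->
  exists2 v, v \in C & (i <= lev d v)%N.
Proof.
case: i => [|k] nC h.
  by case/set0Pn: nC => v vC; exists v.
case: (boolP [exists v in C, (k < lev d v)%N]) => [/exists_inP [v vC hv]|].
  by exists v.
rewrite negb_exists_in => /forall_inP H; exfalso.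
have : (levC d C <= k)%N by apply/bigmax_leqP => v vC; rewrite leqNgt H.
by move/(leq_ltn_trans)/(_ h); rewrite ltnn.
Qed.

Lemma mate_neq (x : term n) : x != mate x.
Proof. by case: x => j b; rewrite /mate /= xpair_eqE eqxx /=; case: b. Qed.

Lemma lev_bound i (x : term n) : (i <= lev d x)%N -> 2 ^+ i <= 2 * d x (mate x).
Proof.
rewrite /lev; case: ex_minnP => m hm hmin.
case: i => [|k] hi.
  have := dge1 (mate_neq x); rewrite expr0 => h; lra.
case: (leP (2 ^+ k.+1) (2 * d x (mate x))) => // hlt; exfalso.
have hk : d x (mate x) <= 2 ^+ k by move: hlt; rewrite exprS => h; lra.
by have := hmin k hk; rewrite leqNgt hi.
Qed.

Definition U (P : {set {set term n}}) i (A : {set term n}) :=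
  \bigcup_(B | connect (hadj d P i) A B) B.

Lemma hadj_sym P i : symmetric (hadj d P i).
Proof.
move=> A B; rewrite /hadj (cdist_sym P A B) eq_sym.
by do 2 case: (_ \in act d P i).
Qed.

Lemma act_conn P i A B : A \in act d P i -> connect (hadj d P i) A B ->
  B \in act d P i.
Proof. by apply: conn_in => u v /and4P []. Qed.

Lemma mem_step P i X : X \in step d P i ->
  (X \in P /\ (levC d X < i)%N) \/ exists2 A, A \in act d P i & X = U P i A.
Proof.
rewrite /step inE => /orP [|/imsetP [A Aa ->]]; last by right; exists A.
by rewrite inE => /andP [XP lX]; left.
Qed.

Lemma mem_U P i A x : (x \in U P i A) = [exists B, connect (hadj d P i) A B && (x \in B)].
Proof.
apply/bigcupP/existsP => [[B cB xB]|[B /andP [cB xB]]]; exists B => //.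
by rewrite cB.
Qed.

Lemma U_step P i A : A \in act d P i -> U P i A \in step d P i.
Proof. by move=> Aa; rewrite /step inE; apply/orP; right; apply: imset_f. Qed.

Lemma sub_U P i A : A \subset U P i A.
Proof. by apply/subsetP => x xA; rewrite mem_U; apply/existsP; exists A; rewrite connect0. Qed.

Lemma inact_step P i X : X \in P -> (levC d X < i)%N -> X \in step d P i.
Proof. by move=> XP lX; rewrite /step inE; apply/orP; left; rewrite inE XP. Qed.

Lemma actE P i A : (A \in act d P i) = (A \in P) && (i <= levC d A)%N.
Proof. by rewrite inE. Qed.

Lemma step_part P i V : part P V -> part (step d P i) V.
Proof.
case=> tP cP nP.
have cs := sym_connect_sym (hadj_sym P i).
have disj B B' x : B \in P -> B' \in P -> x \in B -> x \in B' -> B = B'.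
  by move=> BP B'P xB xB'; rewrite -(def_pblock tP BP xB) (def_pblock tP B'P xB').
have key X Y x : X \in step d P i -> Y \in step d P i -> x \in X -> x \in Y -> X = Y.
  move=> /mem_step [[XP lX]|[A Aa ->]] /mem_step [[YP lY]|[A' Aa' ->]].
  - exact: disj.
  - move=> xX; rewrite mem_U => /existsP [B /andP [cB xB]].
    have := act_conn Aa' cB; rewrite actE => /andP [BP lB].
    by have := disj _ _ _ XP BP xX xB => eXB; move: lX; rewrite eXB ltnNge lB.
  - move=> + xY; rewrite mem_U => /existsP [B /andP [cB xB]].
    have := act_conn Aa cB; rewrite actE => /andP [BP lB].
    by have := disj _ _ _ YP BP xY xB => eXB; move: lY; rewrite eXB ltnNge lB.
  - rewrite !mem_U => /existsP [B /andP [cB xB]] /existsP [B' /andP [cB' xB']].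
    have := act_conn Aa cB; rewrite actE => /andP [BP _].
    have := act_conn Aa' cB'; rewrite actE => /andP [B'P _].
    have eB := disj _ _ _ BP B'P xB xB'; subst B'.
    have cAA' : connect (hadj d P i) A A'.
      by apply: connect_trans cB _; rewrite cs.
    apply/setP => z; rewrite !mem_U; apply/existsP/existsP => [[C /andP [cC zC]]|[C /andP [cC zC]]]; exists C; rewrite zC andbT.
      by apply: connect_trans cC; rewrite cs.
    exact: connect_trans cAA' cC.
split.
- apply/trivIsetP => X Y Xs Ys nXY; apply/disjP => z zX zY.
  by move: nXY; rewrite (key _ _ _ Xs Ys zX zY) eqxx.
- rewrite -cP; apply/setP => x; apply/bigcupP/bigcupP => [[X Xs xX]|[B BP xB]].
    case/mem_step: Xs => [[XP _]|[A Aa eX]]; first by exists X.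
    move: xX; rewrite eX mem_U => /existsP [B /andP [cB xB]].
    have := act_conn Aa cB; rewrite actE => /andP [BP _].
    by exists B.
  case: (ltnP (levC d B) i) => lB.
    by exists B => //; exact: inact_step.
  have Ba : B \in act d P i by rewrite actE BP.
  exists (U P i B); first exact: U_step.
  exact: (subsetP (sub_U P i B)).
- apply/negP => /mem_step [[s0 _]|[A Aa eA]]; first by move: nP; rewrite s0.
  move: Aa; rewrite actE => /andP [AP _].
  have : A != set0 by apply: contraNneq nP => <-.
  case/set0Pn => x xA.
  by have := subsetP (sub_U P i A) x xA; rewrite -eA inE.
Qed.

Lemma clus_part t i : part (clus d t i) (Vt n t).
Proof.
elim: i => [|i IH] /=; last exact: step_part.
split.
- apply/trivIsetP => X Y /imsetP [x _ ->] /imsetP [y _ ->] nxy.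
  apply/disjP => z; rewrite !inE => /eqP -> /eqP e.
  by move: nxy; rewrite e eqxx.
- rewrite cover_imset; apply/setP => x; apply/bigcupP/idP => [[y yV]|xV].
    by rewrite inE => /eqP ->.
  by exists x => //; rewrite inE.
- apply/negP => /imsetP [x _ e].
  have : x \in (set0 : {set term n}) by rewrite e inE.
  by rewrite inE.
Qed.

Lemma in_clus t i x : x \in Vt n t -> exists2 C, C \in clus d t i & x \in C.
Proof.
have [_ cP _] := clus_part t i.
rewrite -cP => xc; exists (pblock (clus d t i) x); first exact: pblock_mem.
by rewrite mem_pblock.
Qed.

Lemma clus_uniq t i C C' x : C \in clus d t i -> C' \in clus d t i ->
  x \in C -> x \in C' -> C = C'.
Proof.
have [tP _ _] := clus_part t i.
by move=> CP C'P xC xC'; rewrite -(def_pblock tP CP xC) (def_pblock tP C'P xC').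
Qed.

Lemma clus_sub t i C : C \in clus d t i -> C \subset Vt n t.
Proof.
have [_ cP _] := clus_part t i.
by move=> CP; rewrite -cP; apply/subsetP => x xC; apply/bigcupP; exists C.
Qed.

Lemma clus_ne0 t i C : C \in clus d t i -> C != set0.
Proof.
have [_ _ nP] := clus_part t i.
by move=> CP; apply: contraNneq nP => <-.
Qed.

Definition psi (P' : {set {set term n}}) (C : {set term n}) :=
  odflt C [pick D in P' | C \subset D].

Lemma psiP P P' C : refine P P' -> C \in P -> psi P' C \in P' /\ C \subset psi P' C.
Proof.
move=> rf CP; rewrite /psi; case: pickP => [D /andP [DP sD] //|].
by have [D DP sD] := rf C CP => /(_ D); rewrite DP sD.
Qed.

Lemma step_refine P P' V V' i : part P V -> part P' V' -> refine P P' ->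
  refine (step d P i) (step d P' i).
Proof.
case=> tP cP nP [tP' cP' nP'] rf X /mem_step [[XP lX]|[A Aa ->]].
  have [DP sD] := psiP rf XP.
  case: (ltnP (levC d (psi P' X)) i) => lD.
    by exists (psi P' X) => //; exact: inact_step.
  have Da : psi P' X \in act d P' i by rewrite actE DP.
  exists (U P' i (psi P' X)); first exact: U_step.
  exact: subset_trans sD (sub_U _ _ _).
have AP : A \in P by move: Aa; rewrite actE => /andP [].
have actpsi B : B \in act d P i -> psi P' B \in act d P' i.
  rewrite !actE => /andP [BP lB]; have [DP sD] := psiP rf BP.
  by rewrite DP (leq_trans lB (levC_mono sD)).
have ne B : B \in P -> B != set0 by move=> BP; apply: contraNneq nP => <-.
have cov B : B \in P -> B \subset cover P.
  by move=> BP; apply/subsetP => x xB; apply/bigcupP; exists B.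
have hom B : connect (hadj d P i) A B ->
    connect (hadj d P' i) (psi P' A) (psi P' B).
  apply: (connect_hom (a := fun B => B \in act d P i)) => //.
    by move=> u v _ /and4P [].
  move=> u v ua /and4P [_ va _ cuv].
  case: (eqVneq (psi P' u) (psi P' v)) => [->|ne']; first exact: connect0.
  apply: connect1; apply/and4P; split => //; [exact: actpsi|exact: actpsi|].
  have uP : u \in P by move: ua; rewrite actE => /andP [].
  have vP : v \in P by move: va; rewrite actE => /andP [].
  apply: le_lt_trans cuv.
  apply: cdist_mono => //; first exact: (psiP rf uP).2.
  + exact: (psiP rf vP).2.
  + exact: ne.
  + exact: ne.
  + exact: cov.
  + exact: cov.
exists (U P' i (psi P' A)); first exact: U_step (actpsi _ Aa).
apply/subsetP => x; rewrite mem_U => /existsP [B /andP [cB xB]].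
have Ba := act_conn Aa cB.
have BP : B \in P by move: Ba; rewrite actE => /andP [].
rewrite mem_U; apply/existsP; exists (psi P' B); rewrite hom //=.
exact: (subsetP (psiP rf BP).2).
Qed.

Lemma clus_refine t i : refine (clus d t i) (clus d t.+1 i).
Proof.
elim: i => [|i IH] /=.
  move=> C /imsetP [x xV ->]; exists [set x] => //; apply/imsetP; exists x => //.
  by move: xV; rewrite !inE => /ltnW.
exact: step_refine (clus_part t i) (clus_part t.+1 i) IH.
Qed.

Lemma close_merge t j x y : x \in Vt n t -> y \in Vt n t ->
  (j <= lev d x)%N -> (j <= lev d y)%N -> d x y < 2 ^+ j ->
  exists2 W, W \in clus d t j & (x \in W) && (y \in W).
Proof.
case: j => [|j] xV yV lx ly dxy.
  have exy : x = y.
    apply/eqP; apply: contraTT dxy => nxy; rewrite -leNgt expr0; exact: dge1.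
  subst y; exists [set x]; first exact: imset_f.
  by rewrite inE eqxx.
have [A AP xA] := in_clus j xV.
have [B BP yB] := in_clus j yV.
have Aa : A \in act d (clus d t j) j.
  by rewrite actE AP (leq_trans (ltnW lx) (lev_le_levC xA)).
have Ba : B \in act d (clus d t j) j.
  by rewrite actE BP (leq_trans (ltnW ly) (lev_le_levC yB)).
exists (U (clus d t j) j A); first exact: U_step.
rewrite (subsetP (sub_U _ _ _) x xA) /= mem_U; apply/existsP; exists B.
rewrite yB andbT.
case: (eqVneq A B) => [->|nAB]; first exact: connect0.
apply: connect1; apply/and4P; split => //.
apply: le_lt_trans dxy.
have [_ cP _] := clus_part t j.
by apply: cdist_le => //; rewrite cP.
Qed.

Lemma srel_sym (S : {set term n * term n}) : symmetric (srel S).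
Proof. by move=> x y; rewrite /srel orbC. Qed.

Lemma path_drop (S : {set term n * term n}) e x y p :
  (e.1 = x \/ e.2 = x) -> x \notin y :: p -> path (srel S) y p ->
  path (srel (S :\ e)) y p.
Proof.
move=> ex; elim: p y => [|z p IH] y //=.
rewrite !inE negb_or => /andP [xy]; rewrite negb_or => /andP [xz xp].
case/andP => syz pz; rewrite IH ?inE ?negb_or ?xz ?xp // andbT.
move: syz; rewrite /srel !inE.
have nye : (y, z) != e.
  by apply/eqP => ee; case: ex; rewrite -ee /= => ex; [move: xy|move: xz]; rewrite ex eqxx.
have nze : (z, y) != e.
  by apply/eqP => ee; case: ex; rewrite -ee /= => ex; [move: xz|move: xy]; rewrite ex eqxx.
by rewrite nye nze.
Qed.

Lemma path_var (f : term n -> R) (S : {set term n * term n}) x p :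
  path (srel S) x p -> uniq (x :: p) ->
  `|f x - f (last x p)| <= \sum_(q in S) `|f q.1 - f q.2|.
Proof.
elim: p x S => [|y p IH] x S /=.
  by move=> _ _; rewrite subrr normr0; apply: sumr_ge0 => q _.
case/andP => sxy pth /andP [xn up].
pose e := if (x, y) \in S then (x, y) else (y, x).
have eS : e \in S.
  by rewrite /e; case: ifP => //; move: sxy; rewrite /srel => /orP [->|].
have ex : e.1 = x \/ e.2 = x by rewrite /e; case: ifP; [left|right].
have fe : `|f x - f y| = `|f e.1 - f e.2|.
  by rewrite /e; case: ifP => //= _; rewrite distrC.
have := IH y (S :\ e) (path_drop ex xn pth) up.
rewrite (bigD1 e eS) /=.
have -> : \sum_(q in S :\ e) `|f q.1 - f q.2| = \sum_(q in S | q != e) `|f q.1 - f q.2|.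
  by apply: eq_bigl => q; rewrite !inE andbC.
move=> h; apply: le_trans (ler_distD (f y) _ _) _.
by rewrite fe lerD2l.
Qed.

Lemma conn_var (f : term n -> R) (S : {set term n * term n}) x y :
  connect (srel S) x y -> `|f x - f y| <= \sum_(q in S) `|f q.1 - f q.2|.
Proof.
case/connectP => p pth ->.
case: (shortenP pth) => p' pth' up _.
exact: path_var.
Qed.

Section Ball.
Variables (i : nat) (Q : {set term n}).
Hypothesis hQ1 : {in Q, forall q, 2 ^+ i <= 2 * d q (mate q)}.
Hypothesis hQ2 : {in Q &, forall q q', q != q' -> 2 ^+ i <= 2 * d q q'}.

Let r : R := 2 ^+ i / 4.
Let r_gt0 : 0 < r.
Proof. by rewrite /r divr_gt0 // exprn_gt0. Qed.
Let r4 : 2 ^+ i = 4 * r.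
Proof. by rewrite /r mulrC divfK // pnatr_eq0. Qed.

Definition fb (q z : term n) : R := if d q z < r then r - d q z else 0.

Lemma fb_lip q a b : `|fb q a - fb q b| <= d a b.
Proof.
have h1 := dtri q a b; have h2 := dtri q b a; rewrite (dsym b a) in h2.
have ha := dge0 q a; have hb := dge0 q b.
rewrite /fb ler_norml; case: ltP => la; case: ltP => lb; apply/andP; split; lra.
Qed.

Lemma card_near a : (#|[set q in Q | (d q a < r)%R]| <= 1)%N.
Proof.
apply/card_le1_eqP => q q'; rewrite !inE => /andP [qQ qa] /andP [q'Q q'a].
apply/eqP; apply: contraTT isT => nqq.
have := hQ2 q'Q qQ nqq; have := dtri q' a q; rewrite (dsym a q) r4 => h1 h2.
have : 4 * r < 4 * r by lra.
by rewrite ltxx.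
Qed.

Lemma sum_fb a b : \sum_(q in Q) `|fb q a - fb q b| <= 2 * d a b.
Proof.
pose g z q : R := if d q z < r then d a b else 0.
have hab := dge0 a b.
apply: le_trans (_ : \sum_(q in Q) (g a q + g b q) <= _).
  apply: ler_sum => q _; rewrite /g.
  case: ltP => la; case: ltP => lb.
  - by have := fb_lip q a b; lra.
  - by have := fb_lip q a b; lra.
  - by have := fb_lip q a b; lra.
  - by rewrite /fb; case: ltP => h1; case: ltP => h2; rewrite ?subrr ?normr0; lra.
rewrite big_split /=.
have hg z : \sum_(q in Q) g z q <= d a b.
  rewrite /g -big_mkcondr /=.
  rewrite (eq_bigl (fun q => q \in [set q in Q | (d q z < r)%R])); last by move=> q; rewrite inE.
  rewrite sumr_const; case: #|_| (card_near z) => [|[|//]] _.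
    by rewrite mulr0n.
  by rewrite mulr1n.
have := hg a; have := hg b; lra.
Qed.

Lemma ball_cost S : feasible S -> #|Q|%:R * 2 ^+ i <= 8 * cost d S.
Proof.
move=> fS.
have hq q : q \in Q -> r <= \sum_(p in S) `|fb q p.1 - fb q p.2|.
  move=> qQ.
  have cq : connect (srel S) q (mate q).
    case: q qQ => j [] _ /=; last exact: fS.
    by rewrite (sym_connect_sym (@srel_sym S)); exact: fS.
  apply: le_trans (conn_var (fb q) cq).
  have := hQ1 qQ; rewrite r4 => hm.
  have rp := r_gt0.
  rewrite /fb d0 r_gt0; case: ltP => hl; first by lra.
  by rewrite !subr0 ger0_norm // ltW.
have : #|Q|%:R * r <= 2 * cost d S.
  apply: le_trans (_ : \sum_(q in Q) \sum_(p in S) `|fb q p.1 - fb q p.2| <= _).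
    by rewrite mulr_natl -sumr_const; apply: ler_sum => q qQ; exact: hq.
  rewrite exchange_big /cost big_distrr /=.
  by apply: ler_sum => p _; exact: sum_fb.
have rp := r_gt0; rewrite r4 => h; lra.
Qed.

Lemma ball_opt : #|Q|%:R * 2 ^+ i.+1 <= 16 * OPT d.
Proof.
rewrite /OPT.
have -> : 16 * inf [set r0 : R | exists S, feasible S /\ r0 = cost d S]%classic =
  16 * inf [set r0 : R | exists S, feasible S /\ r0 = cost d S]%classic by [].
suff h : #|Q|%:R * 2 ^+ i / 8 <= inf [set r0 : R | exists S, feasible S /\ r0 = cost d S]%classic.
  by rewrite exprS; lra.
apply: lb_le_inf.
  exists (cost d [set (j, false, (j, true)) | j : 'I_n]).
  exists [set (j, false, (j, true)) | j : 'I_n]; split => // j.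
  by apply: connect1; rewrite /srel imset_f.
move=> r0 [S [fS ->]]; have := ball_cost fS; lra.
Qed.

End Ball.

Lemma clus0 j : clus d 0 j = set0.
Proof.
elim: j => [|j IH] /=.
  apply/setP => C; rewrite in_set0; apply/imsetP => [[x]].
  by rewrite in_set ltn0.
rewrite IH; apply/setP => C; rewrite in_set0 /step in_setU; apply/negbTE.
rewrite negb_or; apply/andP; split; first by rewrite in_set in_set0.
by apply/imsetP => [[A]]; rewrite in_set in_set0.
Qed.

Lemma hedgesP P j e : e \in hedges d P j ->
  exists A, exists B, [/\ A \in act d P j, B \in act d P j, hadj d P j A B & e = [set A; B]].
Proof. by case/imset2P => A B Aa; rewrite inE => /andP [Ba h] ->; exists A, B. Qed.

Lemma pair_hadj P j a b : [set a; b] \in hedges d P j -> hadj d P j a b.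
Proof.
case/hedgesP => A [B [Aa Ba h e]].
have nAB : A != B by case/and4P: h.
have aS : a \in [set A; B] by rewrite -e !inE eqxx.
have bS : b \in [set A; B] by rewrite -e !inE eqxx orbT.
have AS : A \in [set a; b] by rewrite e !inE eqxx.
have BS : B \in [set a; b] by rewrite e !inE eqxx orbT.
case/set2P: aS => ea; case/set2P: bS => eb; subst a b => //.
- by case/set2P: BS => eB; move: nAB; rewrite eB eqxx.
- by rewrite hadj_sym.
- by case/set2P: AS => eB; move: nAB; rewrite eB eqxx.
Qed.

Lemma card_split (Qs : {set term n}) m : #|[set x in Qs | (x.1 < m.+1)%N]| =
  (#|[set x in Qs | (x.1 < m)%N]| + #|[set x in Qs | x.1 == m :> nat]|)%N.
Proof.
rewrite -(cardsID [set x : term n | (x.1 < m)%N] [set x in Qs | (x.1 < m.+1)%N]).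
congr (_ + _)%N; apply: eq_card => x; rewrite ?in_setI ?in_setD !in_set;
  case: (x \in Qs) => //=; rewrite ?andbF // ltnS; by case: ltngtP.
Qed.

Section Main.
Variables (Finh F : nat -> nat -> {set {set {set term n}}}).
Hypothesis adm : admissible d Finh F.
Variable i : nat.

Let P t := clus d t i.
Let Va t := act d (P t) i.
Let kap t := ncl (Va t) (F t i).
Let N t := Va t :\: (psi (P t) @: Va t.-1).

Definition Qs := [set x : term n | (i <= lev d x)%N &&
  [forall y : term n, ((y.1 < x.1)%N && (i <= lev d y)%N) ==> (2 ^+ i <= d x y)]].

Lemma F_hedges t : (t <= n)%N -> F t i \subset Hedges d t i.
Proof.
case: adm => a0 at1; case: t => [|t] ht.
  by rewrite a0 sub0set.
by have [_ [] ] := at1 t.+1 i ht.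
Qed.

Lemma actpsi t C : C \in Va t -> psi (P t.+1) C \in Va t.+1 /\ C \subset psi (P t.+1) C.
Proof.
rewrite /Va !actE => /andP [CP lC].
have [DP sD] := psiP (@clus_refine t i) CP.
by rewrite DP (leq_trans lC (levC_mono sD)).
Qed.

Lemma hadj_psi t u v : hadj d (P t) i u v -> psi (P t.+1) u != psi (P t.+1) v ->
  hadj d (P t.+1) i (psi (P t.+1) u) (psi (P t.+1) v).
Proof.
case/and4P => ua va _ cuv ne; apply/and4P; split => //.
- exact: (actpsi ua).1.
- exact: (actpsi va).1.
have uP : u \in P t by move: ua; rewrite actE => /andP [].
have vP : v \in P t by move: va; rewrite actE => /andP [].
have [tP cP _] := clus_part t i.
have [tP' _ _] := clus_part t.+1 i.
apply: le_lt_trans cuv.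
apply: cdist_mono => //.
- exact: clus_refine.
- exact: (actpsi ua).2.
- exact: (actpsi va).2.
- exact: (clus_ne0 uP).
- exact: (clus_ne0 vP).
- by rewrite cP; exact: clus_sub uP.
- by rewrite cP; exact: clus_sub vP.
Qed.

Lemma claim1 t : (1 <= t <= n)%N ->
  (#|F t i :\: Finh t i| + kap t <= kap t.-1 + #|N t|)%N.
Proof.
case: t => [//|t] /andP [_ ht].
case: adm => a0 at1.
have [[sFinh acFinh cFinh] [sF acF cF] sub] := at1 t.+1 i (andb_true_intro (conj isT ht)).
have h1 := forest_count (V := Va t.+1) acF sub.
apply: leq_trans (h1 _) _.
  move=> e eF; have := subsetP sF e eF.
  case/hedgesP => A [B [Aa Ba h ->]]; exists A, B; split => //.
  by case/and4P: h.
have sA : psi (P t.+1) @: Va t \subset Va t.+1.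
  by apply/subsetP => D /imsetP [C Ca ->]; exact: (actpsi Ca).1.
have eV : Va t.+1 = (psi (P t.+1) @: Va t) :|: N t.+1.
  apply/setP => D; rewrite /N /= in_setU in_setD.
  case: (boolP (D \in psi (P t.+1) @: Va t)) => h //=.
  by rewrite (subsetP sA _ h).
rewrite /ncl.
have -> : [set cls (Va t.+1) (Finh t.+1 i) x | x in Va t.+1] =
  [set cls (Va t.+1) (Finh t.+1 i) x | x in psi (P t.+1) @: Va t] :|:
  [set cls (Va t.+1) (Finh t.+1 i) x | x in N t.+1].
  by rewrite -imsetU -eV.
apply: leq_trans (leq_card_setU _ _) _.
rewrite leq_add // ?leq_imset_card //.
rewrite -imset_comp.
apply: card_img_le => C C' Ca C'a /eqP; rewrite cls_eq // => cC.
apply/eqP; rewrite /= cls_eq; [|exact: (actpsi Ca).1|exact: (actpsi C'a).1].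
have tn : (t <= n)%N by exact: ltnW.
have sFt := F_hedges tn.
apply: (connect_hom (a := fun C => C \in Va t)) cC => //.
  move=> u v _ /(subsetP sFt) /pair_hadj /and4P [] //.
move=> u v ua ed; have huv := pair_hadj (subsetP sFt _ ed).
have va : v \in Va t by case/and4P: huv.
case: (eqVneq (psi (P t.+1) u) (psi (P t.+1) v)) => [->|ne]; first exact: connect0.
apply: cFinh; rewrite inE; apply/andP; split.
  have := hadj_psi huv ne => hh.
  apply/imset2P; exists (psi (P t.+1) u) (psi (P t.+1) v) => //.
    by case/and4P: hh.
  by rewrite inE hh; case/and4P: hh => _ -> _ _.
apply/existsP; exists (psi (P t.+1) u); apply/existsP; exists (psi (P t.+1) v).
apply/existsP; exists u; apply/existsP; exists v.
have ed' : [set u; v] \in F t i := ed.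
by rewrite eqxx ed' (actpsi ua).2 (actpsi va).2.
Qed.

Lemma old_psi t y : y \in Vt n t -> (i <= lev d y)%N ->
  exists2 C, C \in Va t & y \in psi (P t.+1) C.
Proof.
move=> yV ly; have [C CP yC] := @in_clus t i y yV.
have Ca : C \in Va t by rewrite /Va actE CP (leq_trans ly (lev_le_levC yC)).
by exists C => //; exact: (subsetP (actpsi Ca).2).
Qed.

Lemma claim2 t : (1 <= t)%N ->
  (#|N t| <= #|[set x in Qs | x.1 == t.-1 :> nat]|)%N.
Proof.
case: t => [//|t] _ /=.
pose w (D : {set term n}) := [pick x in D | (i <= lev d x)%N].
have key D : D \in N t.+1 ->
    exists x, [/\ w D = Some x, x \in D & x \in [set x in Qs | x.1 == t :> nat]].
  rewrite /N /= in_setD => /andP [nD Da].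
  have DP : D \in P t.+1 by move: Da; rewrite /Va actE => /andP [].
  have lD : (i <= levC d D)%N by move: Da; rewrite /Va actE => /andP [].
  rewrite /w; case: pickP => [x /andP [xD lx]|]; last first.
    have [v vD lv] := exists_lev (clus_ne0 DP) lD.
    by move/(_ v); rewrite vD lv.
  exists x; split => //.
  have xV : x \in Vt n t.+1 := subsetP (clus_sub DP) x xD.
  have notold y : y \in Vt n t -> (i <= lev d y)%N -> y \in D -> False.
    move=> yV ly yD; have [C Ca yC] := old_psi yV ly.
    have [pC _] := actpsi Ca; rewrite /Va actE in pC; case/andP: pC => pC _.
    by move: nD; rewrite (clus_uniq DP pC yD yC) imset_f.
  have x1 : x.1 = t :> nat.
    move: xV; rewrite in_set ltnS leq_eqVlt => /orP [/eqP //|lt].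
    by exfalso; apply: (notold x) => //; rewrite in_set.
  rewrite in_set x1 eqxx andbT in_set lx /=.
  apply/forallP => y; apply/implyP => /andP [ly1 ly].
  rewrite leNgt; apply/negP => dxy.
  have yV : y \in Vt n t by rewrite in_set -x1.
  have yV' : y \in Vt n t.+1 by rewrite in_set ltnS ltnW // -x1.
  have [W WP /andP [xW yW]] := @close_merge t.+1 i x y xV yV' lx ly dxy.
  have [C Ca yC] := old_psi yV ly.
  have [pC _] := actpsi Ca; rewrite /Va actE in pC; case/andP: pC => pC _.
  have eD : D = W := clus_uniq DP WP xD xW.
  have eC : psi (P t.+1) C = W := clus_uniq pC WP yC yW.
  by move: nD; rewrite eD -eC imset_f.
have inj : {in N t.+1 &, injective w}.
  move=> D D' DN D'N e.
  have [x [wx xD _]] := key D DN; have [x' [wx' x'D _]] := key D' D'N.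
  move: e; rewrite wx wx' => [[ex]]; subst x'.
  have DP : D \in P t.+1 by move: DN; rewrite /N /= in_setD /Va actE => /and3P [].
  have D'P : D' \in P t.+1 by move: D'N; rewrite /N /= in_setD /Va actE => /and3P [].
  exact: clus_uniq DP D'P xD x'D.
rewrite -(card_in_imset inj).
have -> : #|[set x in Qs | x.1 == t :> nat]| = #|Some @: [set x in Qs | x.1 == t :> nat]|.
  by rewrite (card_imset _ (@Some_inj _)).
apply: subset_leq_card; apply/subsetP => o /imsetP [D DN ->].
by have [x [wx _ xQ]] := key D DN; rewrite wx; exact: imset_f.
Qed.


Lemma main_ind m : (m <= n)%N ->
  (\sum_(1 <= t < m.+1) #|F t i :\: Finh t i| + kap m <= #|[set x in Qs | (x.1 < m)%N]|)%N.
Proof.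
elim: m => [|m IH] hm.
  rewrite big_geq // add0n /kap /Va /P clus0.
  have -> : act d set0 i = set0 by apply/setP => C; rewrite in_set in_set0.
  by rewrite /ncl imset0 cards0.
rewrite big_nat_recr //= (card_split Qs).
have h1 := @claim1 m.+1 hm.
have h2 := @claim2 m.+1 isT.
have := IH (ltnW hm).
move: h1 h2 => /=.
move: (\sum_(1 <= t < m.+1) #|F t i :\: Finh t i|) => S.
move: (#|F m.+1 i :\: Finh m.+1 i|) (kap m.+1) (kap m) (#|N m.+1|) => a b c e.
move: (#|[set x in Qs | (x.1 < m)%N]|) (#|[set x in Qs | x.1 == m :> nat]|) => f g.
lia.
Qed.

Lemma Qs1 : {in Qs, forall q, 2 ^+ i <= 2 * d q (mate q)}.
Proof. by move=> q; rewrite in_set => /andP [lq _]; exact: lev_bound. Qed.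

Lemma Qs2 : {in Qs &, forall q q', q != q' -> 2 ^+ i <= 2 * d q q'}.
Proof.
move=> q q' qQ q'Q nqq.
have hQ (a b : term n) : a \in Qs -> (b.1 < a.1)%N -> b \in Qs -> 2 ^+ i <= 2 * d a b.
  rewrite !in_set => /andP [_ /forallP H] lt /andP [lb _].
  have := H b; rewrite lt lb /= => h; have := dge0 a b; lra.
case: (ltngtP q.1 q'.1) => h.
- rewrite dsym; exact: hQ.
- exact: hQ.
have em : q' = mate q.
  move: nqq h; case: q {qQ} => j b; case: q' {q'Q} => j' b' /= nqq ejj.
  have ej : j' = j by apply: val_inj.
  subst j'; move: nqq; rewrite /mate /=.
  by case: b; case: b' => //; rewrite eqxx.
by rewrite em; exact: Qs1.
Qed.

End Main.

End Metric.

Theorem theorem4p7 (R : realType) :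
  exists c : R,
  forall (n : nat) (d : term n -> term n -> R),
  is_metric_ge1 d ->
  forall Finh F : nat -> nat -> {set {set {set term n}}},
  admissible d Finh F ->
  forall i : nat,
  \sum_(1 <= t < n.+1) (#|F t i :\: Finh t i|)%:R * 2 ^+ i.+1
    <= c * OPT d.
Proof.
exists 16 => n d dm Finh F adm i.
have h := main_ind dm adm i (leqnn n).
have hs : (\sum_(1 <= t < n.+1) #|F t i :\: Finh t i| <= #|Qs d i|)%N.
  apply: leq_trans (leq_addr _ _) _; apply: leq_trans h _.
  by apply: subset_leq_card; apply/subsetP => x; rewrite in_set => /andP [].
rewrite -mulr_suml -natr_sum.
apply: le_trans (ball_opt dm (@Qs1 _ _ _ dm i) (@Qs2 _ _ _ dm i)).
by apply: ler_wpM2r; [exact: exprn_ge0 | rewrite ler_nat].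
Qed.
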